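(* Consider $N\ge2$ agents $V=\{1,\dots,N\}$ with states evolving, with zero control input, according to $$\dot x_i(t)=\sum_{j\in\mathcal N_i}|a_{ij}(t)|\bigl(\operatorname{sgn}(a_{ij}(t))\,x_j(t)-x_i(t)\bigr),\qquad i\in V,$$ over a signed time-varying graph $\mathcal G_A(t)$ whose coefficients satisfy (A1)–(A3) below. Suppose $\mathcal G_A(t)$ is uniformly quasi strongly $\delta$-connected with constant $T>0$ such that, for every $t\ge t_0\ge0$, the condensation graph of $G_\delta[t,t+T)$ contains a fixed node set $S\subseteq V$ forming a strongly connected component, with a $\delta$-path in $G_\delta[t,t+T)$ from $S$ to every node of $R:=V\setminus S$. Let $h(t):=\max_{i\in R}|x_i(t)|$, $c(t):=\max_{i\in S}|x_i(t)|$, $N_s:=\operatorname{card}(S)$, and suppose that for almost all $t\ge t_0$ the inequalities $D^+h(t)\le M_0N_s(c(t)-h(t))$ and $D^+c(t)\le0$ hold. Let $s,k\in\mathbb{Z}_{\ge0}$ and $K:=kT$. Then for almost all $t\in[t_0+sK,\,t_0+(s+1)K]$, $$c(t)\le c(t_0+sK),\qquad h(t)\le h(t_0+sK)+c(t_0+sK).$$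
   Context: $\operatorname{sgn}$ is the sign function; $a_{ij}(t)$ is the signed influence of agent $j$ on agent $i$; $\mathcal N_i$ is the set of incoming neighbors of $i$; solutions are Carathéodory (absolutely continuous). $D^+h(t)=\limsup_{s\to0^+}\frac{h(t+s)-h(t)}{s}$ is the upper Dini derivative. Assumptions: (A1) each $a_{ij}(t)$ is piecewise continuous on every compact interval with discontinuity set of Lebesgue measure zero; (A2) $a_{ii}\equiv0$; (A3) there is $M_0>0$ with $\int_{t_1}^{t_2}|a_{ij}(s)|\,ds\le M_0(t_2-t_1)$ for all $t_1\le t_2$. Graph notions: for $\delta>0$, a $\delta$-arc from $j$ to $i$ on $[t_1,t_2)$ means $\int_{t_1}^{t_2}|a_{ij}(t)|\,dt\ge\delta(t_2-t_1)$; a $\delta$-path is a directed path of $\delta$-arcs; $G_\delta[t_1,t_2)$ is the digraph on $V$ of $\delta$-arcs on $[t_1,t_2)$; its condensation graph has the strongly connected components as nodes. Uniformly quasi strongly $\delta$-connected: there is $T>0$ such that for every $t\ge0$ the condensation graph of $G_\delta[t,t+T)$ has a root node with a $\delta$-path to every other node. *)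

(* Defs.v *)
From HB Require Import structures.
From mathcomp Require Import all_boot all_order all_algebra.
From mathcomp Require Import all_classical all_reals all_analysis.
Set Implicit Arguments. Unset Strict Implicit. Unset Printing Implicit Defensive.
Import Order.TTheory GRing.Theory Num.Theory.
Import numFieldNormedType.Exports.
Local Open Scope classical_set_scope.
Local Open Scope ring_scope.

Section Defs.
Variable R : realType.

Definition integ (f : R -> R) (t1 t2 : R) : R :=
  Rintegral (@lebesgue_measure R) [set` `[t1, t2]] f.

(* f is piecewise continuous on [t1,t2]: finitely many breakpoints
   t1 = tau 0 <= ... <= tau m = t2, and on each open piece f coincides with
   a function continuous on the closed piece (finite one-sided limits). *)
Definition piecewise_continuous_on (f : R -> R) (t1 t2 : R) : Prop :=
  exists (m : nat) (tau : nat -> R),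
    tau 0%N = t1 /\ tau m = t2 /\
    (forall k, (k < m)%N -> tau k < tau k.+1) /\
    (forall k, (k < m)%N -> exists g : R -> R,
        {within `[tau k, tau k.+1], continuous g} /\
        (forall t, tau k < t < tau k.+1 -> f t = g t)).

Definition A1_coef (f : R -> R) : Prop :=
  forall t1 t2, 0 <= t1 -> t1 <= t2 ->
    piecewise_continuous_on f t1 t2 /\
    (@lebesgue_measure R).-negligible
       [set t | t1 <= t <= t2 /\ ~ {for t, continuous f}].

Definition abs_continuous_on (f : R -> R) (a b : R) : Prop :=
  forall eps : R, 0 < eps -> exists2 d : R, 0 < d &
    forall (n : nat) (l r : nat -> R),
      (forall k, (k < n)%N -> a <= l k /\ l k <= r k /\ r k <= b) ->
      (forall k, (k.+1 < n)%N -> r k <= l k.+1) ->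
      \sum_(k < n) (r k - l k) < d ->
      \sum_(k < n) `|f (r k) - f (l k)| < eps.

Definition dini_upper (h : R -> R) (t : R) : \bar R :=
  limf_esup (fun s => ((h (t + s) - h t) / s)%:E) (at_right 0).

Variable N : nat.

Definition in_nbrs (a : R -> 'I_N -> 'I_N -> R) (t : R) (i : 'I_N) : {set 'I_N} :=
  [set j | a t i j != 0].

Definition rhs (a : R -> 'I_N -> 'I_N -> R) (x : 'I_N -> R) (t : R) (i : 'I_N) : R :=
  \sum_(j in in_nbrs a t i) `|a t i j| * (Num.sg (a t i j) * x j - x i).

Definition caratheodory_solution (a : R -> 'I_N -> 'I_N -> R) (x : R -> 'I_N -> R) : Prop :=
  (forall i u v, 0 <= u -> u <= v -> abs_continuous_on (fun t => x t i) u v) /\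
  {ae (@lebesgue_measure R), forall t, 0 <= t -> forall i,
      derivable (fun s => x s i) t 1 /\
      derive1 (fun s => x s i) t = rhs a (x t) t i}.

(* delta-arc from j to i on [t1,t2): G_delta[t1,t2) as a boolean relation,
   arc_rel j i means there is a delta-arc from j to i *)
Definition arc_rel (a : R -> 'I_N -> 'I_N -> R) (delta t1 t2 : R) : rel 'I_N :=
  fun j i => delta * (t2 - t1) <= integ (fun t => `|a t i j|) t1 t2.

Definition dpath a delta t1 t2 (u v : 'I_N) : bool :=
  connect (arc_rel a delta t1 t2) u v.

Definition is_scc (e : rel 'I_N) (C : {set 'I_N}) : Prop :=
  C != finset.set0 /\
  (forall u v, u \in C -> v \in C -> connect e u v) /\
  (forall u v, u \in C -> connect e u v -> connect e v u -> v \in C).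

Definition condensation_has_root (e : rel 'I_N) : Prop :=
  exists C : {set 'I_N}, is_scc e C /\
    forall v, exists2 u, u \in C & connect e u v.

Definition uniformly_quasi_strongly_connected a delta T : Prop :=
  forall t, 0 <= t -> condensation_has_root (arc_rel a delta t (t + T)).

(* max over a node set of |x_i(t)| (0 for the empty set) *)
Definition maxabs (x : R -> 'I_N -> R) (A : {set 'I_N}) (t : R) : R :=
  \big[Num.max/0]_(i in A) `|x t i|.

End Defs.

(* Main.v *)
Require Import Defs.
From HB Require Import structures.
From mathcomp Require Import all_boot all_order all_algebra.
From mathcomp Require Import all_classical all_reals all_analysis.
Import Order.TTheory GRing.Theory Num.Theory.
Import numFieldNormedType.Exports.
Local Open Scope classical_set_scope.
Local Open Scope ring_scope.

From mathcomp Require Import ring lra measurable_realfun.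
Section K.
Variable R : realType.
Local Notation mu := (@lebesgue_measure R).

Definition fam_ok (G : set R) (u t : R) (n : nat) (l r : nat -> R) :=
  (forall k, (k < n)%N -> [/\ u <= l k, l k <= r k, r k <= t &
      (forall z, l k <= z <= r k -> G z)]) /\
  (forall k, (k.+1 < n)%N -> r k <= l k.+1).

Lemma fam_len_aux (G : set R) (mG : measurable G) u t l r n : fam_ok G u t n l r ->
  forall x, (forall k, (k.+1 == n)%N -> r k <= x) ->
  ((\sum_(k < n) (r k - l k))%:E <= mu (G `&` [set` `]-oo, x]]))%E.
Proof.
elim: n => [|n IH] [ok1 ok2] x hx.
  by rewrite big_ord0 measure_ge0.
rewrite big_ord_recr /= EFinD.
have [u1 l1 r1 G1] := ok1 n (ltnSn n).
have IH' := IH (conj (fun k kn => ok1 k (ltnW kn)) (fun k kn => ok2 k (ltnW kn))) (l n).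
have mi : mu [set` `]l n, r n]] = (r n - l n)%:E.
  rewrite lebesgue_measure_itv /=; case: ltP => /= h; first by rewrite EFinB.
  rewrite lee_fin in h.
  have e : r n = l n by apply/eqP; rewrite eq_le l1 h.
  by rewrite e subrr.
rewrite -mi.
apply: le_trans (leeD (IH' _) (lexx _)) _.
  by move=> k /eqP kn; rewrite -kn; apply: ok2; rewrite kn.
rewrite -measureU //=.
- apply: le_measure; rewrite ?inE /=.
  + apply: measurableU; last exact: measurable_itv.
    by apply: measurableI => //; exact: measurable_itv.
  + by apply: measurableI => //; exact: measurable_itv.
  move=> z [[Gz]|]; rewrite /= !in_itv /= => zl.
    by split => //; rewrite (le_trans zl) // (le_trans l1) // hx.
  case/andP: zl => z1 z2; split; first by apply: G1; rewrite z2 ltW.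
  by rewrite (le_trans z2) // hx.
- by apply: measurableI => //; exact: measurable_itv.
- apply/seteqP; split => // z [[_]]; rewrite /= !in_itv /= => z1 /andP[z2 _].
  by move: (lt_le_trans z2 z1); rewrite ltxx.
Qed.

Lemma fam_len (G : set R) (mG : measurable G) u t l r n : fam_ok G u t n l r ->
  ((\sum_(k < n) (r k - l k))%:E <= mu G)%E.
Proof.
move=> ok; have h := (@fam_len_aux G mG u t l r n ok t).
have {}h : ((\sum_(k < n) (r k - l k))%:E <= mu (G `&` [set` `]-oo, t]]))%E.
  by apply: h => k /eqP kn; case: (ok.1 k); rewrite ?kn.
apply: (le_trans h).

by apply: le_measure; rewrite ?inE //; apply: measurableI => //; exact: measurable_itv.
Qed.

Lemma dini_le0 (f : R -> R) t e : (dini_upper f t <= 0)%E -> 0 < e ->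
  exists2 rho, 0 < rho & forall s, 0 < s < rho -> f (t + s) - f t <= e * s.
Proof.
move=> hd e0.
have : (ereal_inf [set ereal_sup ((fun s => ((f (t + s) - f t) / s)%:E) @` V) | V in at_right 0] < e%:E)%E.
  by apply: le_lt_trans hd _; rewrite lte_fin.
case/ereal_inf_lt => _ [V hV <-] hlt.
case/nbhs_ballP: hV => rho rho0 H.
exists rho => // s /andP[s0 srho].
have Vs : V s by apply: H => //; rewrite /ball /= sub0r normrN gtr0_norm.
have : (((f (t + s) - f t) / s)%:E < e%:E)%E.
  by apply: le_lt_trans hlt; apply: ereal_sup_ubound; exists s.
by rewrite lte_fin ltr_pdivrMr // => /ltW.
Qed.

Lemma ac_cont (f : R -> R) a b t e : abs_continuous_on f a b -> a <= t <= b -> 0 < e ->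
  exists2 d, 0 < d & forall s, a <= s <= b -> `|s - t| < d -> `|f s - f t| < e.
Proof.
move=> ac /andP[at_ tb] e0; have [d d0 H] := ac e e0.
exists d => // s /andP[sa sb] hd.
have [st|ts] := leP s t.
- have := H 1%N (fun _ => s) (fun _ => t).
  rewrite !big_ord1 => h.
  rewrite distrC; apply: h.
  + by move=> k _; split; [|split].
  + by [].
  + by move: hd; rewrite distrC ger0_norm // subr_ge0.
- have := H 1%N (fun _ => t) (fun _ => s).
  rewrite !big_ord1 => h.
  apply: h.
  + by move=> k _; split; [|split] => //; exact: ltW.
  + by [].
  + by move: hd; rewrite gtr0_norm // subr_gt0.
Qed.

Lemma fam_ok_mono G u t t' n l r : t <= t' -> fam_ok G u t n l r -> fam_ok G u t' n l r.
Proof.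
move=> tt' [ok1 ok2]; split => // k kn; case: (ok1 k kn) => a b c g.
by split => //; exact: le_trans c tt'.
Qed.

Lemma key (f : R -> R) (u v m : R) (E : set R) :
  u <= v -> abs_continuous_on f u v -> measurable E -> mu E = 0%E ->
  f u <= m ->
  (forall t, u <= t -> t < v -> ~ E t -> m < f t -> (dini_upper f t <= 0)%E) ->
  f v <= m.
Proof.
move=> uv ac mE E0 fum hd.
apply/ler_addgt0Pr => e' e'0.
have p2 : 0 < v - u + 2 by lra.
pose e := e' / (v - u + 2).
have e0 : 0 < e by apply: divr_gt0.
have -> : e' = e * (v - u) + e + e.
  by rewrite /e; field; rewrite gt_eqF.
have [d d0 acd] := ac e e0.
have [G [oG EG GE]] := lebesgue_regularity_outer mE (eq_ind_r (fun z => z < +oo)%E (ltry 0) E0) d0.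
have mG : measurable G := open_measurable oG.
have muG : (mu G < d%:E)%E.
  apply: le_lt_trans GE.
  rewrite -{1}(setDUK EG) setUC.
  have h := measureU2 mu (measurableD mG mE) mE.
  move: h; rewrite -[X in (_ <= _ + X)%E]/(mu E) E0 adde0; exact.
have famb : forall n l r, fam_ok G u v n l r ->
    \sum_(k < n) `|f (r k) - f (l k)| < e.
  move=> n l r ok; apply: acd.
  - by move=> k kn; case: (ok.1 k kn) => a b c g; split => //; split.
  - exact: ok.2.
  - by rewrite -lte_fin; exact: le_lt_trans (@fam_len G mG u v l r n ok) muG.
pose S t := [set y | exists n l r, fam_ok G u t n l r /\
                     y = \sum_(k < n) `|f (r k) - f (l k)|].
pose V t := sup (S t).
have S0 t : S t 0.
  exists 0%N, (fun _ => 0), (fun _ => 0); split; last by rewrite big_ord0.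
  by split => k.
have Sle t : t <= v -> forall y, S t y -> y <= e.
  move=> tv y [n [l [r [ok ->]]]]; apply/ltW/famb.
  exact: fam_ok_mono tv ok.
have hsup t : t <= v -> has_sup (S t).
  by move=> tv; split; [exists 0; exact: S0|exists e => y; exact: Sle].
have V0 t : t <= v -> 0 <= V t.
  by move=> tv; exact: (ub_le_sup (hsup t tv).2 (S0 t)).
have Vle t : t <= v -> V t <= e.
  by move=> tv; apply: ge_sup; [exists 0; exact: S0|exact: Sle].
have Vmono t t' : t <= t' -> t' <= v -> V t <= V t'.
  move=> tt' t'v; apply: ge_sup; first by exists 0; exact: S0.
  move=> y [n [l [r [ok ->]]]]; apply: (ub_le_sup (hsup t' t'v).2).
  by exists n, l, r; split => //; exact: fam_ok_mono tt' ok.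
have Vext t1 t2 : u <= t1 -> t1 <= t2 -> t2 <= v ->
    (forall z, t1 <= z <= t2 -> G z) -> V t1 + `|f t2 - f t1| <= V t2.
  move=> ut1 t12 t2v Gz.
  rewrite -lerBrDr; apply: ge_sup; first by exists 0; exact: S0.
  move=> y [n [l [r [[ok1 ok2] ->]]]]; rewrite lerBrDr.
  pose l' k := if k == n then t1 else l k.
  pose r' k := if k == n then t2 else r k.
  have ok' : fam_ok G u t2 n.+1 l' r'.
    split.
    - move=> k; rewrite ltnS leq_eqVlt => /orP[/eqP->|kn].
        by rewrite /l' /r' eqxx; split.
      rewrite /l' /r' (ltn_eqF kn); case: (ok1 k kn) => a b c g.
      by split => //; exact: le_trans c t12.
    - move=> k; rewrite ltnS leq_eqVlt => /orP[/eqP kn|kn].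
        rewrite /l' /r' kn eqxx.
        have kn' : (k < n)%N by rewrite -kn.
        rewrite (ltn_eqF kn'); by case: (ok1 k kn').
      have kn' : (k < n)%N by apply: ltn_trans kn.
      by rewrite /l' /r' (ltn_eqF kn) (ltn_eqF kn'); exact: ok2.
  have : S t2 (\sum_(k < n.+1) `|f (r' k) - f (l' k)|) by exists n.+1, l', r'.
  move/(ub_le_sup (hsup t2 t2v).2); rewrite big_ord_recr /= /l' /r' eqxx.
  congr (_ + _ <= _); apply: eq_bigr => k _.
  by rewrite (ltn_eqF (ltn_ord k)).
pose A := [set t | (u <= t <= v) /\ f t <= m + e * (t - u) + e + V t].
have Au : A u.
  split; first by rewrite lexx uv.
  have := V0 u uv; rewrite subrr mulr0 addr0; lra.
have hA : has_sup A.
  by split; [exists u|exists v => y [/andP[_ ->]]].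
set ts := sup A.
have ub : forall t, A t -> t <= ts by move=> t At; exact: (ub_le_sup hA.2).
have uts : u <= ts := ub u Au.
have tsv : ts <= v by apply: ge_sup; [exists u|move=> y [/andP[_ ->]]].
have adh r : 0 < r -> exists2 t, A t & ts - r < t.
  by move=> r0; exact: sup_adherent.
have right r : 0 < r -> ts < v -> exists t, [/\ ts < t, t <= v & t < ts + r].
  move=> r0 tsv'; case: (lerP (ts + r / 2) v) => h.
    by exists (ts + r / 2); split => //; lra.
  by exists v; split => //; lra.
have noA t : ts < t -> A t -> False.
  by move=> tst /ub; rewrite leNgt tst.
have [Ats ntsv] : A ts /\ ~ (ts < v).
  case: (pselect (G ts)) => [Gts|nGts].
  - have /nbhs_ballP [r r0 Hr] := oG ts Gts.
    have [t1 At1 t1r] := adh r r0.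
    have t1ts := ub t1 At1.
    have ext t : t1 <= t -> t <= v -> t < ts + r -> A t.
      move=> t1t tv tr; case: At1 => /andP[ut1 _] ft1.
      split; first by rewrite tv (le_trans ut1 t1t).
      have := Vext t1 t ut1 t1t tv.
      have Gz : forall z, t1 <= z <= t -> G z.
        move=> z /andP[z1 z2]; apply: Hr; rewrite /ball /= ltr_distlC; apply/andP; split; lra.
      move=> /(_ Gz) hV.
      have hn := ler_norm (f t - f t1).
      have : e * (t1 - u) <= e * (t - u) by apply: ler_wpM2l; [exact: ltW|lra].
      lra.
    split; first by apply: ext => //; lra.
    move=> tsv'; have [t [tst tv tr]] := right r r0 tsv'.
    by apply: (noA t tst); apply: ext => //; lra.
  - have nEts : ~ E ts by move=> /EG.
    have Ats : A ts.
      split; first by rewrite uts tsv.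
      apply/ler_addgt0Pr => eta eta0.
      have [dc dc0 Hc] := ac_cont _ _ _ _ _ ac (introT andP (conj uts tsv)) eta0.
      have [t1 At1 t1d] := adh dc dc0.
      have t1ts := ub t1 At1.
      case: At1 => /andP[ut1 t1v] ft1.
      have h := Hc t1 (introT andP (conj ut1 t1v)).
      have {h} : `|f t1 - f ts| < eta by apply: h; rewrite ltr_distlC; apply/andP; split; lra.
      rewrite ltr_distlC => /andP[h1 h2].
      have := Vmono t1 ts t1ts tsv.
      have : e * (t1 - u) <= e * (ts - u) by apply: ler_wpM2l; [exact: ltW|lra].
      lra.
    split => // tsv'.
    case: Ats => _ fts.
    case: (ltP m (f ts)) => [mf|fm].
    + have [rho rho0 Hrho] := dini_le0 _ _ _ (hd ts uts tsv' nEts mf) e0.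
      have [t [tst tv tr]] := right rho rho0 tsv'.
      apply: (noA t tst); split; first by rewrite tv (le_trans uts (ltW tst)).
      have := Hrho (t - ts); rewrite (addrC ts) subrK => /(_ _) h.
      have {}h : f t - f ts <= e * (t - ts) by apply: h; apply/andP; split; lra.
      have := Vmono ts t (ltW tst) tv.
      have : e * (t - u) = e * (ts - u) + e * (t - ts) by rewrite -mulrDr; congr (_ * _); lra.
      lra.
    + have [dc dc0 Hc] := ac_cont _ _ _ _ _ ac (introT andP (conj uts tsv)) e0.
      have [t [tst tv tr]] := right dc dc0 tsv'.
      apply: (noA t tst); split; first by rewrite tv (le_trans uts (ltW tst)).
      have h := Hc t (introT andP (conj (le_trans uts (ltW tst)) tv)).
      have {h} : `|f t - f ts| < e by apply: h; rewrite ltr_distlC; apply/andP; split; lra.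
      rewrite ltr_distlC => /andP[h1 h2].
      have := V0 t tv.
      have : 0 <= e * (t - u) by rewrite mulr_ge0 // ?ltW //; lra.
      lra.
have tsv' : ts = v by apply/eqP; rewrite eq_le tsv leNgt; apply/negP.
case: Ats => _; rewrite tsv' => hv.
have := Vle v (lexx v).
lra.
Qed.
End K.
Section M.
Variable R : realType.

Lemma max_lip (p q p' q' : R) :
  `|Num.max p q - Num.max p' q'| <= `|p - p'| + `|q - q'|.
Proof.
have h1 := ler_norm (p - p'); have h2 := ler_norm (p' - p).
have h3 := ler_norm (q - q'); have h4 := ler_norm (q' - q).
rewrite (distrC p') in h2; rewrite (distrC q') in h4.
rewrite ler_norml !maxEle.
case: (leP p q) => a; case: (leP p' q') => b; apply/andP; split; lra.
Qed.

Lemma maxabs_lip N (x : R -> 'I_N -> R) (A : {set 'I_N}) s t :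
  `|maxabs x A s - maxabs x A t| <= \sum_i `|x s i - x t i|.
Proof.
rewrite /maxabs.
apply: le_trans (_ : _ <= \sum_(i in A) `|x s i - x t i|) _.
  apply: (big_rec3 (fun y1 y2 y3 => `|y1 - y2| <= y3)); first by rewrite subrr normr0.
  move=> i y1 y2 y3 _ h.
  apply: le_trans (max_lip _ _ _ _) _; apply: lerD => //.
  exact: ler_dist_dist.
rewrite [X in _ <= X](bigID (fun i => i \in A)) /= lerDl.
by apply: sumr_ge0 => i _.
Qed.

Lemma ac_maxabs N (x : R -> 'I_N -> R) (A : {set 'I_N}) u v :
  (forall i, abs_continuous_on (fun t => x t i) u v) ->
  abs_continuous_on (maxabs x A) u v.
Proof.
move=> ac eps eps0.
have e10 : 0 < eps / (N.+1)%:R by apply: divr_gt0.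
have : forall i : 'I_N, exists d, 0 < d /\ forall (n : nat) (l r : nat -> R),
      (forall k, (k < n)%N -> u <= l k /\ l k <= r k /\ r k <= v) ->
      (forall k, (k.+1 < n)%N -> r k <= l k.+1) ->
      \sum_(k < n) (r k - l k) < d ->
      \sum_(k < n) `|x (r k) i - x (l k) i| < eps / (N.+1)%:R.
  by move=> i; have [d d0 H] := ac i _ e10; exists d.
case/boolp.choice => d hd.
pose dl := \big[Num.min/1]_i d i.
have dl0 : 0 < dl.
  by apply: (big_rec (fun y => 0 < y)) => // i y _ y0; rewrite lt_min y0 (hd i).1.
have dli i : dl <= d i by rewrite /dl (bigD1 i) //= ge_min lexx.
exists dl => // n l r h1 h2 h3.
apply: (le_lt_trans (_ : _ <= \sum_(k < n) \sum_i `|x (r k) i - x (l k) i|)).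
  by apply: ler_sum => k _; exact: maxabs_lip.
rewrite exchange_big /=.
apply: (le_lt_trans (_ : _ <= \sum_(i < N) eps / (N.+1)%:R)).
  apply: ler_sum => i _; apply/ltW; apply: (hd i).2 => //.
  exact: lt_le_trans h3 (dli i).
rewrite sumr_const card_ord -[X in X < _]mulr_natl.
have -> : N%:R * (eps / (N.+1)%:R) = eps * (N%:R / (N.+1)%:R) by ring.
by rewrite gtr_pMr // ltr_pdivrMr // mul1r ltr_nat.



Qed.
End M.

Theorem lemma3 (R : realType) (N : nat) (a : R -> 'I_N -> 'I_N -> R)
  (x : R -> 'I_N -> R) (M0 delta T t0 : R) (S : {set 'I_N}) (s k : nat) :
  (2 <= N)%N ->
  (* (A1) *)
  (forall i j, A1_coef (fun t => a t i j)) ->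
  (* (A2) *)
  (forall i t, a t i i = 0) ->
  (* (A3) *)
  0 < M0 ->
  (forall i j t1 t2, 0 <= t1 -> t1 <= t2 ->
      integ (fun t => `|a t i j|) t1 t2 <= M0 * (t2 - t1)) ->
  (* x is a Caratheodory solution of the zero-input dynamics *)
  caratheodory_solution a x ->
  0 < delta -> 0 < T -> 0 <= t0 ->
  uniformly_quasi_strongly_connected a delta T ->
  (forall t, t0 <= t ->
     is_scc (arc_rel a delta t (t + T)) S /\
     forall i, i \notin S -> exists2 j, j \in S & dpath a delta t (t + T) j i) ->
  {ae (@lebesgue_measure R), forall t, t0 <= t ->
     (dini_upper (maxabs x (~: S)) t <=
        (M0 * #|S|%:R * (maxabs x S t - maxabs x (~: S) t))%:E)%E /\
     (dini_upper (maxabs x S) t <= 0)%E} ->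
  let K := k%:R * T in
  let c := maxabs x S in
  let h := maxabs x (~: S) in
  {ae (@lebesgue_measure R), forall t,
     t0 + s%:R * K <= t <= t0 + (s.+1)%:R * K ->
     c t <= c (t0 + s%:R * K) /\
     h t <= h (t0 + s%:R * K) + c (t0 + s%:R * K)}.
Proof.
move=> N2 A1 A2 M0p A3 [acx _] d0 T0 t00 UQ Hs Hae K c h.
case: Hae => Nn [mN N0 sub].
have Pt : forall t, ~ Nn t -> t0 <= t ->
    (dini_upper (maxabs x (~: S)) t <=
        (M0 * #|S|%:R * (maxabs x S t - maxabs x (~: S) t))%:E)%E /\
     (dini_upper (maxabs x S) t <= 0)%E.
  move=> t nt; case: (pselect (t0 <= t -> (dini_upper (maxabs x (~: S)) t <=
        (M0 * #|S|%:R * (maxabs x S t - maxabs x (~: S) t))%:E)%E /\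
     (dini_upper (maxabs x S) t <= 0)%E)) => // nP.
  by exfalso; apply: nt; apply: sub.
have mx0 : forall A t, 0 <= maxabs x A t.
  move=> A t; rewrite /maxabs.
  by apply: (big_rec (fun y => 0 <= y)) => // i y _ y0; rewrite le_max y0 orbT.
apply: aeW => t /andP[t1 t2].
set tau := t0 + s%:R * K.
have Ktau : t0 <= tau.
  rewrite /tau lerDl; apply: mulr_ge0 => //; rewrite /K mulr_ge0 //; exact: ltW.
have tau0 : 0 <= tau by exact: le_trans t00 Ktau.
have cdec : forall t', tau <= t' -> c t' <= c tau.
  move=> t' tt'.
  apply: (@key R c tau t' (c tau) Nn) => //.
  - by apply: ac_maxabs => i; apply: acx.
  - move=> r ur rv nr _.
    exact: (Pt r nr (le_trans Ktau ur)).2.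
split; first exact: cdec.
apply: (@key R h tau t (h tau + c tau) Nn) => //.
- by apply: ac_maxabs => i; apply: acx.
- by rewrite lerDl; apply: mx0.
- move=> r ur rv nr hr.
  apply: le_trans (Pt r nr (le_trans Ktau ur)).1 _.
  rewrite lee_fin; apply: mulr_ge0_le0.
    by apply: mulr_ge0; [exact: ltW|].
  have := cdec r ur; have := mx0 (~: S) tau.
  rewrite /c /h in hr * => *; lra.
Qed.
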